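(* Let $f:\{0,1\}^n\to\mathbb{R}$ and suppose $\{x,x+\mathbf{e}_i,x+\mathbf{e}_j,x+\mathbf{e}_i+\mathbf{e}_j\}$ is a violated square of $f$. Then it is possible to decrease all the values of $f$ either on $\{y: y\le x\}$ or on $\{y : y \ge x+\mathbf{e}_i+\mathbf{e}_j\}$ by a common constant so that, in the resulting function, the square $\{x,x+\mathbf{e}_i,x+\mathbf{e}_j,x+\mathbf{e}_i+\mathbf{e}_j\}$ is no longer violated and no square that was not violated in $f$ becomes violated.
   Context: $\mathbf{e}_i$ denotes the $i$-th standard basis vector of $\{0,1\}^n$ and $\le$ is the coordinatewise order. A square is a set $\{x, x+\mathbf{e}_i, x+\mathbf{e}_j, x+\mathbf{e}_i+\mathbf{e}_j\}$ with $i\neq j$, $x_i=x_j=0$; it is violated (for $f$) if $f(x)+f(x+\mathbf{e}_i+\mathbf{e}_j) > f(x+\mathbf{e}_i)+f(x+\mathbf{e}_j)$. *)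

(* Defs.v *)
From HB Require Import structures.
From mathcomp Require Import all_boot all_order all_algebra.
Set Implicit Arguments. Unset Strict Implicit. Unset Printing Implicit Defensive.
Import Order.TTheory GRing.Theory Num.Theory.
Local Open Scope ring_scope.

(* The Boolean cube {0,1}^n : a point is a function 'I_n -> bool
   (true = 1, false = 0). *)
Definition cube (n : nat) := {ffun 'I_n -> bool}.

(* x + e_i, used only when x_i = 0: set coordinate i to 1. *)
Definition adde n (x : cube n) (i : 'I_n) : cube n :=
  [ffun k => if k == i then true else x k].

Definition cle n (x y : cube n) : bool := [forall k, x k ==> y k].

Definition violated (R : realFieldType) n (f : cube n -> R)
    (x : cube n) (i j : 'I_n) : Prop :=
  [/\ i != j, x i = false, x j = false &
      f (adde x i) + f (adde x j) < f x + f (adde (adde x i) j)].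

Definition decr_on (R : realFieldType) n (f : cube n -> R)
    (S : cube n -> bool) (c : R) : cube n -> R :=
  fun y => if S y then f y - c else f y.

(* Main.v *)
Require Import Defs.
From HB Require Import structures.
From mathcomp Require Import all_boot all_order all_algebra.
From mathcomp Require Import lra.
Import Order.TTheory GRing.Theory Num.Theory.
Local Open Scope ring_scope.

Lemma cle_adde n (y x : cube n) k : cle (adde y k) x -> cle y x.
Proof.
move/forallP=> H; apply/forallP=> m; have := H m; rewrite ffunE.
by case: (m == k) => //= hx; apply/implyP.
Qed.

Lemma cle_adde2 n (y x : cube n) k l :
  cle (adde y k) x -> cle (adde y l) x -> cle (adde (adde y k) l) x.
Proof.
move/forallP=> H1 /forallP H2; apply/forallP=> m.
have := H1 m; have := H2 m; rewrite !ffunE.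
by case: (m == l); case: (m == k).
Qed.

Lemma cle_refl n (x : cube n) : cle x x.
Proof. by apply/forallP=> m; apply/implyP. Qed.

Lemma cle_adde_false n (y x : cube n) k : x k = false -> cle (adde y k) x = false.
Proof.
move=> xk; apply/negbTE/negP=> /forallP /(_ k); by rewrite ffunE eqxx xk.
Qed.

Theorem lemma2 (R : realFieldType) (n : nat) (f : cube n -> R)
    (x : cube n) (i j : 'I_n) :
  violated f x i j ->
  exists (S : cube n -> bool) (c : R),
    [/\ (S = (fun y => cle y x)) \/
        (S = (fun y => cle (adde (adde x i) j) y)),
      0 < c,
      ~ violated (decr_on f S c) x i j &
      forall (y : cube n) (k l : 'I_n),
        violated (decr_on f S c) y k l -> violated f y k l].
Proof.
case=> ij xi xj hv.
exists (fun y => cle y x), (f x + f (adde (adde x i) j) - f (adde x i) - f (adde x j)).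
split.
- by left.
- lra.
- case=> _ _ _; rewrite /decr_on cle_refl !cle_adde_false // ?ffunE ?xj ?(negbTE ij) //.
  + lra.
- move=> y k l [kl yk yl]; rewrite /decr_on => h; split => //.
  have h1 := @cle_adde n y x k.
  have h2 := @cle_adde n y x l.
  have h3 := @cle_adde n (adde y k) x l.
  have h5 := @cle_adde2 n y x k l.
  have h4 : cle (adde (adde y k) l) x -> cle (adde y l) x.
    move=> /forallP H; apply/forallP=> m; have := H m; rewrite !ffunE.
    by case: (m == l); case: (m == k) => //= hx; apply/implyP.
  move: h h1 h2 h3 h4 h5.
  case: (cle y x); case: (cle (adde y k) x); case: (cle (adde y l) x);
  case: (cle (adde (adde y k) l) x) => //= h h1 h2 h3 h4 h5;
  try (have := h1 isT; done); try (have := h2 isT; done);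
  try (have := h3 isT; done); try (have := h4 isT; done);
  try (have := h5 isT isT; done); lra.
Qed.
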